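(* For any configuration $\mathcal{C}$ of $d$ doors there is a knock sequence $\pi$ such that $\mathbb{T}_{\mathcal{C}}(\pi)\le\mathbb{T}_{\mathcal{C}}(\pi')$ for every knock sequence $\pi'$.
   Context: Dependent doors model. Fix an integer $d\ge 2$ and doors $1,\dots,d$, all initially closed; once a door opens it stays open forever. A configuration $\mathcal{C}$ specifies for each door $i$ a function $\phi_i^{\mathcal{C}}$ mapping every finite nonempty sequence $(X_1,\dots,X_n)$ of subsets of $\{1,\dots,i-1\}$ to $[0,1]$: $\phi_i^{\mathcal{C}}(X_1,\dots,X_n)$ is the probability that door $i$ has opened during $n$ knocks on it, where $X_j$ is the set of open doors among $\{1,\dots,i-1\}$ at the time of the $j$-th knock on door $i$ (so a closed door $i$ opens at its $n$-th knock with conditional probability $(\phi_i(X_1..X_n)-\phi_i(X_1..X_{n-1}))/(1-\phi_i(X_1..X_{n-1}))$, with $\phi_i$ of the empty sequence equal to $0$). Configurations are assumed monotone ($\phi_i(X')\le\phi_i(X)$ whenever $X'$ is a, not necessarily consecutive, subsequence of $X$) and positively correlated ($\phi_i(X'_1,\dots,X'_n)\le\phi_i(X_1,\dots,X_n)$ whenever $X'_j\subseteq X_j$ for all $j$). The fundamental distribution of door $i$ is $p_i(n)=1-\phi_i(\{1,\dots,i-1\}^n)$ ($p_i(0)=1$), and $E_i=\sum_{n\ge0}p_i(n)$ is assumed finite. A knock sequence $\pi$ is an infinite sequence of door indices, executed in order without any feedback; $\mathbb{T}_{\mathcal{C}}(\pi)$ is the expected number of knocks until all $d$ doors are open. *)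

(* Defs.v *)
From HB Require Import structures.
From mathcomp Require Import all_boot all_order all_algebra.
From mathcomp Require Import reals ereal sequences.
Set Implicit Arguments. Unset Strict Implicit. Unset Printing Implicit Defensive.
Import Order.TTheory GRing.Theory Num.Theory.
Local Open Scope ring_scope.

(* Doors are 'I_d (door k of the paper is the ordinal k-1).
   A configuration is phi : forall i : 'I_d, seq {set 'I_d} -> R, where
   phi i [:: X_1; ...; X_n] is the probability that door i has opened
   during n knocks on it, X_j being the set of open doors among the
   predecessors of i at the j-th knock. *)

Section Doors.
Variables (R : realType) (d : nat).

Definition preds (i : 'I_d) : {set 'I_d} := [set j : 'I_d | (j < i)%N].

Definition valid_hist (i : 'I_d) (s : seq {set 'I_d}) : bool :=
  all (fun X : {set 'I_d} => X \subset preds i) s.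

Variable phi : forall i : 'I_d, seq {set 'I_d} -> R.

Definition phi0 (i : 'I_d) (s : seq {set 'I_d}) : R :=
  if s is [::] then 0 else phi i s.

Definition phi_range : Prop :=
  forall i s, valid_hist i s -> s != [::] -> 0 <= phi i s <= 1.

Definition phi_monotone : Prop :=
  forall i s s', valid_hist i s -> subseq s' s -> phi0 i s' <= phi0 i s.

Definition phi_poscorr : Prop :=
  forall i s s', valid_hist i s ->
    all2 (fun X' X : {set 'I_d} => X' \subset X) s' s -> phi0 i s' <= phi0 i s.

Definition fund (i : 'I_d) (n : nat) : R := 1 - phi0 i (nseq n (preds i)).

Definition fund_finite : Prop :=
  forall i : 'I_d, (\sum_(0 <= n <oo) (fund i n)%:E < +oo)%E.

Definition is_configuration : Prop :=
  [/\ phi_range, phi_monotone, phi_poscorr & fund_finite].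

Definition knock_seq := nat -> 'I_d.

(* Transition probability of the k-th knock (k = size past - 1, door pi k),
   given the states past = [:: S_0; ...; S_k] (S_m = set of open doors just
   before knock m), to the next state S'.  If door i = pi k is already open
   nothing changes; otherwise, with hist = (X_1,...,X_n) the sets of open
   predecessors of i at all knocks on i so far (including this one), door i
   opens with conditional probability
   (phi(X_1..X_n) - phi(X_1..X_{n-1})) / (1 - phi(X_1..X_{n-1})).
   (When the denominator is 0 the state has probability 0 anyway.) *)
Definition stepP (pi : knock_seq) (past : seq {set 'I_d}) (S' : {set 'I_d}) : R :=
  let k := (size past).-1 in
  let i := pi k in
  let Sk := last set0 past in
  let hist := [seq nth set0 past m :&: preds i |
               m <- [seq m <- iota 0 (size past) | pi m == i]] in
  let prev := take (size hist).-1 hist in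
  let q := (phi0 i hist - phi0 i prev) / (1 - phi0 i prev) in
  if i \in Sk then (if S' == Sk then 1 else 0)
  else if S' == i |: Sk then q
  else if S' == Sk then 1 - q
  else 0.

(* probability of the trajectory S_1, ..., S_t (with S_0 = set0) *)
Definition trajP (pi : knock_seq) (s : seq {set 'I_d}) : R :=
  \prod_(k < size s) stepP pi (take k.+1 (set0 :: s)) (nth set0 s k).

Definition notAllOpen (pi : knock_seq) (t : nat) : R :=
  \sum_(s : t.-tuple {set 'I_d} | last set0 s != [set: 'I_d]) trajP pi s.

(* expected number of knocks until all doors are open:
   E[tau] = sum_{t >= 0} P(tau > t), in the extended reals *)
Definition expT (pi : knock_seq) : \bar R :=
  (\sum_(0 <= t <oo) (notAllOpen pi t)%:E)%E.

End Doors.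

(* Main.v *)
Require Import Defs.
From HB Require Import structures.
From mathcomp Require Import all_boot all_order all_algebra.
From mathcomp Require Import reals ereal sequences.
From mathcomp Require Import boolp classical_sets.
Import Order.TTheory GRing.Theory Num.Theory.
Local Open Scope ring_scope.

Section Aux.
Variables (R : realType) (d : nat) (phi : forall i : 'I_d, seq {set 'I_d} -> R).
Hypothesis hc : is_configuration phi.

Lemma stepP_ge0 pi past S' : 0 <= stepP phi pi past S'.
Proof.
case: hc => hr hm _ _.
rewrite /stepP.
set i := pi _. set Sk := last _ _.
set hist := map _ _. set prev := take _ hist.
have vh : valid_hist i hist.
  by apply/allP => X /mapP [m _ ->]; rewrite subsetIr.
have ba : phi0 phi i prev <= phi0 phi i hist.
  by apply: hm => //; rewrite /prev; exact: take_subseq.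
have a1 : phi0 phi i hist <= 1.
  case E: hist => [|x l] //=. 
  have vh' : valid_hist i (x :: l) by rewrite -E.
  by have /andP[_ ->] := hr i (x :: l) vh' isT.
set q := (_ / _).
have [q0 q1] : 0 <= q /\ q <= 1.
  rewrite /q; have [->|nz] := eqVneq (1 - phi0 phi i prev) 0.
    by rewrite invr0 mulr0 lexx ler01.
  have pos : 0 < 1 - phi0 phi i prev.
    by rewrite lt0r nz /= subr_ge0 (le_trans ba a1).
  split; first by apply: divr_ge0; [rewrite subr_ge0 | exact: ltW].
  by rewrite ler_pdivrMr // mul1r lerD2r.
by case: ifP => _; [case: ifP | case: ifP => _ //; case: ifP => _ //; rewrite subr_ge0].
Qed.

Lemma notAllOpen_ge0 pi t : 0 <= notAllOpen phi pi t.
Proof.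
apply: sumr_ge0 => s _; apply: prodr_ge0 => k _; exact: stepP_ge0.
Qed.

Lemma stepP_local (pi pi' : knock_seq d) past S' : (0 < size past)%N ->
  (forall m, (m < size past)%N -> pi m = pi' m) ->
  stepP phi pi past S' = stepP phi pi' past S'.
Proof.
move=> hp H; rewrite /stepP.
have -> : pi (size past).-1 = pi' (size past).-1 by apply: H; rewrite prednK.
have -> // : [seq m <- iota 0 (size past) | pi m == pi' (size past).-1]
  = [seq m <- iota 0 (size past) | pi' m == pi' (size past).-1].
by apply: eq_in_filter => m; rewrite mem_iota add0n => /andP[_ h]; rewrite H.
Qed.

Lemma notAllOpen_local (pi pi' : knock_seq d) t :
  (forall m, (m < t)%N -> pi m = pi' m) ->
  notAllOpen phi pi t = notAllOpen phi pi' t.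
Proof.
move=> H; apply: eq_bigr => s _; apply: eq_bigr => k _.
have ks : (k < t)%N by case: k => k /=; rewrite size_tuple.
apply: stepP_local.
  by rewrite size_take /= ltnS; case: ifP.
move=> m; rewrite size_take /= ltnS; case: ifP => hk hm; apply: H.
  exact: leq_trans hm ks.
by rewrite ltn_ord in hk.
Qed.

End Aux.

Local Open Scope ereal_scope.
Local Open Scope classical_set_scope.

Theorem mainTheorem8 (R : realType) (d : nat) (hd : (2 <= d)%N)
  (phi : forall i : 'I_d, seq {set 'I_d} -> R) :
  is_configuration phi ->
  exists pi : knock_seq d,
    forall pi' : knock_seq d, (expT phi pi <= expT phi pi')%E.
Proof.
move=> hc.
have j0 : 'I_d := Ordinal (leq_trans (isT : (1 <= 2)%N) hd).
pose ext n (f : knock_seq d) : set (knock_seq d) :=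
  (fun pi : knock_seq d => forall m, (m < n)%N -> pi m = f m).
pose V n f := ereal_inf [set expT phi pi | pi in ext n f].
pose upd (f : knock_seq d) n (j : 'I_d) : knock_seq d :=
  fun x => if x == n then j else f x.
pose W f n j := V n.+1 (upd f n j).
pose am f n := Order.arg_min j0 xpredT (W f n).
have step : forall n f, W f n (am f n) <= V n f.
  move=> n f; apply: le_ereal_inf_tmp => _ [pi' hpi' <-].
  apply: (@le_trans _ _ (W f n (pi' n))).
    by rewrite /am; case: arg_minP => //= i _ H; exact: H.
  apply: ereal_inf_lbound; exists pi' => //= m; rewrite ltnS leq_eqVlt.
  rewrite /upd; case: eqVneq => [-> //|_ /= hm]; exact: hpi'.
pose F := fix F n := match n with 0 => fun _ => j0
                     | n.+1 => upd (F n) n (am (F n) n) end.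
pose M := ereal_inf (range (expT phi)).
have inv : forall n, V n (F n) <= M.
  elim=> [|n IH].
    apply: ereal_inf_le_tmp => _ [pi _ <-]; exists pi => //.
  exact: le_trans (step _ _) IH.
pose pi := fun k => F k.+1 k.
have agree : forall N k, (k < N)%N -> pi k = F N k.
  elim=> [//|N IH] k; rewrite ltnS leq_eqVlt /= /upd.
  case: eqVneq => [-> _|_ /= hk]; [by rewrite /pi /= /upd eqxx | exact: IH].
exists pi => pi'.
apply: (@le_trans _ _ M); last by apply: ereal_inf_lbound; exists pi'.
rewrite /expT.
have nn : forall n, (0 <= n)%N -> xpredT n -> 0 <= (notAllOpen phi pi n)%:E.
  by move=> n _ _; rewrite lee_fin; exact: notAllOpen_ge0.
move: nn; move/ereal_nondecreasing_series/ereal_nondecreasing_cvgn/cvg_lim => -> //.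
apply: ge_ereal_sup => _ [N _ <-].
apply: le_trans (inv N).
apply: le_ereal_inf_tmp => _ [p hp <-].
have -> : \sum_(0 <= i < N | xpredT i) (notAllOpen phi pi i)%:E
        = \sum_(0 <= i < N | xpredT i) (notAllOpen phi p i)%:E.
  rewrite !big_mkcond /=; apply: eq_big_nat => t /andP[_ ht].
  congr (_%:E); apply: notAllOpen_local => m hm.
  by rewrite (agree N) ?(hp m) //; apply: ltn_trans hm ht.
apply: nneseries_lim_ge => n _ _; rewrite lee_fin; exact: notAllOpen_ge0.
Qed.
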